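(* Let $G$ be a connected split graph whose vertex set is partitioned into a clique of order $r$ and an independent set of order $s$. Then for every integer $t\ge 3$, $\varphi(G^t)=\frac{1}{2}(r+s-1)(r+s-2)$.
   Context: All graphs are finite, simple and without isolated vertices. $\mathbb{N}_0$ denotes the set of non-negative integers; for finite $A,B\subseteq\mathbb{N}_0$, $A+B=\{a+b: a\in A, b\in B\}$. An integer additive set-indexer (IASI) of a graph $G$ is an injective map $f$ from $V(G)$ to the finite non-empty subsets of $\mathbb{N}_0$ such that the induced edge map $f^+(uv)=f(u)+f(v)$ is injective on $E(G)$. A weak IASI (WIASI) is an IASI $f$ with $|f^+(uv)|=\max(|f(u)|,|f(v)|)$ for every edge $uv$ (equivalently, for every edge at least one end vertex has a singleton label). A vertex or edge is mono-indexed if its set-label has cardinality $1$. Every graph admits a WIASI. The sparing number $\varphi(G)$ is the minimum, over all WIASIs of $G$, of the number of mono-indexed edges of $G$. The $t$-th power $G^t$ has vertex set $V(G)$, two distinct vertices being adjacent iff their distance in $G$ is at most $t$. A split graph is a graph whose vertex set can be partitioned into a clique and an independent set. *)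

(* Defs.v *)
From mathcomp Require Import all_boot.
Set Implicit Arguments. Unset Strict Implicit. Unset Printing Implicit Defensive.

(* A finite subset of N_0 is represented by a seq nat (duplicates/order
   irrelevant); set equality is membership equality (=i), cardinality is
   the number of distinct elements. *)
Definition ncard (A : seq nat) : nat := size (undup A).

Definition sumset (A B : seq nat) : seq nat :=
  undup [seq a + b | a <- A, b <- B].

Section Graphs.
Variable T : finType.

Definition simple_graph (e : rel T) : Prop :=
  symmetric e /\ irreflexive e.

Definition no_isolated (e : rel T) : Prop := forall u, exists v, e u v.

Definition connected (e : rel T) : Prop := forall u v, connect e u v.

Fixpoint within (e : rel T) (k : nat) (u v : T) : bool :=
  match k with
  | 0 => u == v
  | k'.+1 => within e k' u v || [exists w, within e k' u w && e w v]
  end.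

Definition graph_pow (e : rel T) (t : nat) : rel T :=
  fun u v => (u != v) && within e t u v.

Definition IASI (e : rel T) (f : T -> seq nat) : Prop :=
  (forall u, f u != [::]) /\
  (forall u v, f u =i f v -> u = v) /\
  (forall u v x y, e u v -> e x y ->
     sumset (f u) (f v) =i sumset (f x) (f y) -> [set u; v] = [set x; y]).

Definition WIASI (e : rel T) (f : T -> seq nat) : Prop :=
  IASI e f /\
  (forall u v, e u v -> ncard (sumset (f u) (f v)) = maxn (ncard (f u)) (ncard (f v))).

Definition mono_edges (e : rel T) (f : T -> seq nat) : {set {set T}} :=
  [set E : {set T} | [exists u, exists v,
     [&& E == [set u; v], e u v & ncard (sumset (f u) (f v)) == 1]]].

Definition sparing_number_is (e : rel T) (n : nat) : Prop :=
  (exists f, WIASI e f /\ #|mono_edges e f| = n) /\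
  (forall f, WIASI e f -> n <= #|mono_edges e f|).

End Graphs.

(* Main.v *)
Require Import Defs.
From mathcomp Require Import all_boot zify.
Set Implicit Arguments. Unset Strict Implicit. Unset Printing Implicit Defensive.

Lemma mem_sumsetP A B x :
  reflect (exists a, exists b, [/\ a \in A, b \in B & x = a + b]) (x \in sumset A B).
Proof.
rewrite /sumset mem_undup; apply: (iffP allpairsP).
  by case=> [[a b] /= [ha hb ->]]; exists a, b.
by case=> a [b [ha hb ->]]; exists (a, b).
Qed.

Lemma ncard_eq s1 s2 : s1 =i s2 -> ncard s1 = ncard s2.
Proof.
move=> h; rewrite /ncard; apply: perm_size; apply: uniq_perm; rewrite ?undup_uniq //.
by move=> x; rewrite !mem_undup h.
Qed.

Lemma ncard1E s : ncard s = 1 -> exists c, s =i [:: c].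
Proof.
rewrite /ncard => h; case E: (undup s) h => [|c [|]] //= _.
by exists c => x; rewrite -mem_undup E.
Qed.

Lemma ncard1I s c : s =i [:: c] -> ncard s = 1.
Proof. by move=> h; rewrite (ncard_eq h). Qed.

Lemma ncard_gt0 s : s != [::] -> 0 < ncard s.
Proof.
case: s => // a s _; rewrite /ncard.
have := @uniq_leq_size _ [:: a] (undup (a :: s)) isT; apply.
by move=> x; rewrite inE mem_undup => /eqP ->; rewrite inE eqxx.
Qed.

Lemma seq_max s : s != [::] -> exists2 m, m \in s & forall a, a \in s -> a <= m.
Proof.
elim: s => // a [|b s] IH _.
  by exists a => [|x]; rewrite ?inE // => /eqP ->.
case: IH => // m hm hle.
case: (leqP a m) => h.
  exists m; first by rewrite inE hm orbT.
  by move=> x; rewrite inE => /orP [/eqP ->|/hle].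
exists a; first by rewrite inE eqxx.
move=> x; rewrite inE => /orP [/eqP ->//|/hle hx]; exact: leq_trans hx (ltnW h).
Qed.

Lemma ncard_sumset_ext A B : A != [::] -> B != [::] -> (1 < ncard B) + ncard A <= ncard (sumset A B).
Proof.
move=> hA hB; case: (seq_max hB) => b2 hb2 hle.
have [b1 hb1 hb12] : exists2 b1, b1 \in B & (1 < ncard B) ==> (b1 < b2).
  case: (ltnP 1 (ncard B)) => h; last by exists b2.
  have : exists2 b1, b1 \in B & b1 != b2.
    apply/hasP; apply: contraTT h; move/hasPn => hall.
    rewrite -leqNgt; have -> : ncard B = 1; last by [].
    apply: (@ncard1I _ b2) => x; rewrite inE; apply/idP/idP; last by move/eqP->.
    by move=> hx; have := hall x hx; rewrite negbK.
  case=> b1 hb1 hne; exists b1 => //=; rewrite ltn_neqAle hne hle //.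
case: (seq_max hA) => m hm hmle.
pose s1 := [seq a + b1 | a <- undup A] ++ (if 1 < ncard B then [:: m + b2] else [::]).
have us1 : uniq s1.
  rewrite cat_uniq map_inj_uniq ?undup_uniq; last by move=> x y /addIn.
  case: (1 < ncard B) hb12 => //= hlt; rewrite andbT orbF; apply/mapP => -[a].
  rewrite mem_undup => /hmle ha /eqP; rewrite eqn_leq => /andP [h _].
  by have := leq_add ha hlt; rewrite addnS ltnNge h.
have sub : {subset s1 <= sumset A B}.
  move=> x; rewrite mem_cat => /orP [/mapP [a ha ->]|].
    by apply/mem_sumsetP; exists a, b1; rewrite -mem_undup.
  case: (1 < ncard B) => //; rewrite inE => /eqP ->.
  by apply/mem_sumsetP; exists m, b2.
have := uniq_leq_size us1 sub; rewrite size_cat size_map /ncard.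
rewrite (undup_id (undup_uniq _)) addnC.
by case: (1 < ncard B); rewrite /= ?addn1 ?addn0.
Qed.

Lemma sumsetC A B : sumset A B =i sumset B A.
Proof.
move=> x; apply/mem_sumsetP/mem_sumsetP => -[a [b [ha hb ->]]]; exists b, a;
  by rewrite addnC.
Qed.

Section G.
Variable T : finType.
Implicit Types (e : rel T).

Lemma within_refl e k u : within e k u u.
Proof. by elim: k => [|k IH] /=; rewrite ?eqxx ?IH. Qed.

Lemma within_comp e a b u w v : within e a u w -> within e b w v -> within e (a + b) u v.
Proof.
move=> h1; elim: b v => [|b IH] v /=; first by rewrite addn0 => /eqP <-.
rewrite addnS /= => /orP [/IH -> //|/existsP [w' /andP [h2 h3]]].
by apply/orP; right; apply/existsP; exists w'; rewrite IH.
Qed.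

Lemma within1 e u v : (u == v) || e u v -> within e 1 u v.
Proof.
case/orP => [/eqP ->|h]; first exact: within_refl.
by apply/orP; right; apply/existsP; exists u; rewrite /= eqxx.
Qed.

Lemma pow_complete e (K S : {set T}) t :
  simple_graph e -> no_isolated e ->
  K :|: S = [set: T] ->
  (forall u v, u \in K -> v \in K -> u != v -> e u v) ->
  (forall u v, u \in S -> v \in S -> ~~ e u v) ->
  3 <= t -> forall u v, graph_pow e t u v = (u != v).
Proof.
move=> [sym irr] noiso cov hK hS ht u v; rewrite /graph_pow.
case: (u =P v) => //= _.
have hk : forall x, exists2 w, w \in K & (x == w) || e x w.
  move=> x; have : x \in K :|: S by rewrite cov inE.
  rewrite inE => /orP [hx|hx]; first by exists x; rewrite ?eqxx.
  case: (noiso x) => w hw; exists w => //; last by rewrite hw orbT.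
  have : w \in K :|: S by rewrite cov inE.
  rewrite inE => /orP [//|hw']; by have := hS _ _ hx hw'; rewrite hw.
have hkk : forall w1 w2, w1 \in K -> w2 \in K -> within e 1 w1 w2.
  move=> w1 w2 h1 h2; apply: within1; case: (w1 =P w2) => //= /eqP; exact: hK.
case: (hk u) => w1 k1 h1; case: (hk v) => w2 k2 h2.
have h3 : within e 3 u v.
  apply: (@within_comp e 2 1 u w2 v); first apply: (@within_comp e 1 1 u w1 w2).
  - exact: within1.
  - exact: hkk.
  apply: within1; move: h2; rewrite eq_sym; case/orP => [->//|]; by rewrite sym => ->; rewrite orbT.
by rewrite -(subnKC ht); apply: within_comp h3 (within_refl _ _ _).
Qed.
End G.

Lemma ncard_sumsetl A B : A != [::] -> B != [::] -> ncard A <= ncard (sumset A B).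
Proof. by move=> hA hB; apply: leq_trans (ncard_sumset_ext hA hB); apply: leq_addl. Qed.

Lemma ncard_sumsetr A B : A != [::] -> B != [::] -> ncard B <= ncard (sumset A B).
Proof. by move=> hA hB; rewrite (ncard_eq (sumsetC A B)); apply: ncard_sumsetl. Qed.

Lemma ncard_sumset11 A B : ncard A = 1 -> ncard B = 1 -> ncard (sumset A B) = 1.
Proof.
move=> /ncard1E [a ha] /ncard1E [b hb]; apply: (@ncard1I _ (a + b)) => x.
rewrite inE; apply/mem_sumsetP/eqP => [[a' [b' [h1 h2 ->]]]|->].
  by move: h1 h2; rewrite ha hb !inE => /eqP -> /eqP ->.
by exists a, b; rewrite ha hb !inE !eqxx.
Qed.

Section G.
Variable T : finType.
Variable e : rel T.
Hypothesis He : forall u v, e u v = (u != v).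

Definition Aset (f : T -> seq nat) := [set u | ncard (f u) == 1].

Lemma mono_char f : (forall u, f u != [::]) ->
  mono_edges e f = [set E : {set T} | E \subset Aset f & (#|E| == 2)].
Proof.
move=> hne; apply/setP => E; rewrite !inE; apply/idP/idP.
  case/existsP => u /existsP [v /and3P [/eqP -> huv /eqP h1]].
  rewrite He in huv; rewrite cards2 huv andbT subUset !sub1set !inE.
  have gu := ncard_gt0 (hne u); have gv := ncard_gt0 (hne v).
  have := ncard_sumsetl (hne u) (hne v); have := ncard_sumsetr (hne u) (hne v).
  rewrite h1 => a b; rewrite !eqn_leq a b.
  by rewrite gu gv.
case/andP => hs /cards2P [u [v [huv hE]]]; apply/existsP; exists u; apply/existsP; exists v.
move: hs; rewrite hE He huv eqxx subUset !sub1set !inE => /andP [/eqP a /eqP b] /=.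
by rewrite ncard_sumset11.
Qed.

Lemma lower_A f : WIASI e f -> #|T| - 1 <= #|Aset f|.
Proof.
case=> [[hne _] hw].
have : #|~: Aset f| <= 1.
  apply/card_le1_eqP => u v; rewrite !inE => hu hv.
  case: (u =P v) => // /eqP huv; exfalso.
  have := hw u v; rewrite He huv => /(_ isT) h.
  have g2 : forall w, ncard (f w) != 1 -> 1 < ncard (f w).
    by move=> w; have := ncard_gt0 (hne w); case: (ncard (f w)) => [|[|]].
  have e1 := ncard_sumset_ext (hne u) (hne v).
  have e2 := ncard_sumset_ext (hne v) (hne u).
  rewrite (ncard_eq (sumsetC (f v) (f u))) in e2.
  rewrite (g2 _ hu) (g2 _ hv) h in e1 e2.
  by move: e1 e2; rewrite /=; lia.
by rewrite -(cardsC (Aset f)) => h; rewrite leq_subLR addnC leq_add2r.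
Qed.
End G.

Lemma logn2_pair a b : a < b -> logn 2 (2 ^ a + 2 ^ b) = a.
Proof.
move=> hab; have -> : 2 ^ a + 2 ^ b = 2 ^ a * (2 ^ (b - a) + 1).
  by rewrite mulnDr muln1 -expnD subnKC 1?ltnW // addnC.
rewrite lognM ?expn_gt0 ?addn1 // pfactorK // logn_coprime ?addn0 //.
by rewrite coprime2n /= oddX subn_eq0 leqNgt hab.
Qed.

Lemma pow2_pair_lt a b c d : a < b -> c < d -> 2 ^ a + 2 ^ b = 2 ^ c + 2 ^ d -> a = c /\ b = d.
Proof.
move=> h1 h2 h; have ac : a = c by rewrite -(logn2_pair h1) h logn2_pair.
by subst c; split => //; apply: (expnI (isT : 1 < 2)); apply/eqP; rewrite -(eqn_add2l (2 ^ a)) h.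
Qed.

Lemma pow2_pair a b c d : a != b -> c != d -> 2 ^ a + 2 ^ b = 2 ^ c + 2 ^ d ->
  (a = c /\ b = d) \/ (a = d /\ b = c).
Proof.
move=> h1 h2 h.
case: (ltngtP a b) h1 => // hab _; case: (ltngtP c d) h2 => // hcd _.
- by left; apply: pow2_pair_lt.
- by right; apply: pow2_pair_lt => //; rewrite h addnC.
- by right; case: (@pow2_pair_lt b a c d) => //; rewrite addnC.
- by left; case: (@pow2_pair_lt b a d c) => //; rewrite addnC h addnC.
Qed.

Section G.
Variable T : finType.
Variable e : rel T.
Hypothesis He : forall u v, e u v = (u != v).

Definition ix (u : T) : nat := enum_rank u.
Definition fc (u : T) : seq nat := if ix u == 0 then [:: 0; 1] else [:: 2 ^ ix u].
Definition gc (u : T) : nat := 2 ^ ix u.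

Lemma ix_inj : injective ix.
Proof. by move=> u v /val_inj /enum_rank_inj. Qed.

Lemma gc_in u : gc u \in fc u.
Proof. by rewrite /gc /fc; case: eqP => [->|]; rewrite !inE ?eqxx ?orbT. Qed.

Lemma gc_ge u a : a \in fc u -> a <= gc u.
Proof.
rewrite /gc /fc; case: eqP => [->|_]; rewrite !inE.
  by case/orP => /eqP ->.
by move/eqP ->.
Qed.

Lemma edge_max u v : (gc u + gc v \in sumset (fc u) (fc v)) /\
  forall x, x \in sumset (fc u) (fc v) -> x <= gc u + gc v.
Proof.
split; first by apply/mem_sumsetP; exists (gc u), (gc v); rewrite !gc_in.
by move=> x /mem_sumsetP [a [b [ha hb ->]]]; apply: leq_add; apply: gc_ge.
Qed.

Lemma ncard_fc u : ncard (fc u) = if ix u == 0 then 2 else 1.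
Proof. by rewrite /fc; case: eqP. Qed.

Lemma WIASI_fc : WIASI e fc.
Proof.
split; [split; [|split]|].
- by move=> u; rewrite /fc; case: ifP.
- move=> u v h; apply: ix_inj; apply: (expnI (isT : 1 < 2)).
  have hu := gc_in u; have hv := gc_in v; rewrite h in hu; rewrite -h in hv.
  by apply/eqP; rewrite eqn_leq (gc_ge hu) (gc_ge hv).
- move=> u v x y; rewrite !He => huv hxy hs.
  have [h1 h2] := edge_max u v; have [h3 h4] := edge_max x y.
  have eq : gc u + gc v = gc x + gc y.
    by apply/eqP; rewrite eqn_leq h4 -?hs // h2 // hs.
  have hne : forall a b, a != b -> ix a != ix b.
    by move=> a b; apply: contra => /eqP /ix_inj ->.
  case: (pow2_pair (hne _ _ huv) (hne _ _ hxy) eq) => -[/ix_inj -> /ix_inj ->] //.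
  by rewrite setUC.
- move=> u v; rewrite He => huv; rewrite !ncard_fc /fc.
  case: eqP => hu; case: eqP => hv.
  + by exfalso; move/negP: huv; apply; apply/eqP/ix_inj; rewrite hu hv.
  + rewrite /ncard /sumset /= inE add0n add1n (ltn_eqF (ltnSn _)) /=.
    by rewrite inE (ltn_eqF (ltnSn _)).
  + rewrite /ncard /sumset /= inE addn0 addn1 (ltn_eqF (ltnSn _)) /=.
    by rewrite inE (ltn_eqF (ltnSn _)).
  + by rewrite /ncard /sumset.
Qed.

Lemma card_A_fc : #|Aset fc| = #|T| - 1.
Proof.
case: (posnP #|T|) => hT.
  by rewrite hT; apply/eqP; rewrite -leqn0 -hT max_card.
pose x0 : T := enum_val (Ordinal hT).
have hc : ~: Aset fc = [set x0].
  apply/setP => u; rewrite !inE ncard_fc; case: (ix u =P 0) => h /=.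
    apply/esym/eqP; apply: ix_inj; rewrite h /ix /x0 enum_valK //.
  apply/esym/eqP => hx; apply: h; rewrite hx /ix /x0 enum_valK //.
by rewrite -(cardsC (Aset fc)) hc cards1 addnK.
Qed.
End G.

Theorem mainTheorem7 (T : finType) (e : rel T) (K S : {set T}) (r s t : nat) :
  simple_graph e -> no_isolated e -> connected e ->
  K :&: S = set0 -> K :|: S = [set: T] ->
  (forall u v, u \in K -> v \in K -> u != v -> e u v) ->
  (forall u v, u \in S -> v \in S -> ~~ e u v) ->
  #|K| = r -> #|S| = s -> 3 <= t ->
  sparing_number_is (graph_pow e t) (((r + s - 1) * (r + s - 2)) %/ 2).
Proof.
move=> sg ni _ hKS cov hK hS hr hs ht.
have He := pow_complete sg ni cov hK hS ht.
have hn : #|T| = r + s by rewrite -cardsT -cov cardsU hKS cards0 subn0 hr hs.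
have -> : ((r + s - 1) * (r + s - 2)) %/ 2 = 'C(#|T| - 1, 2).
  by rewrite bin2 divn2 hn -subn1 -subnDA.
split.
  exists (@fc T); split; first exact: WIASI_fc.
  rewrite mono_char //; last by move=> u; rewrite /fc; case: ifP.
  by rewrite cards_draws card_A_fc.
move=> f hf; rewrite mono_char //; last by case: hf => -[].
by rewrite cards_draws; apply: leq_bin2l; apply: lower_A hf.
Qed.
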